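(* Let $M$ and $M'$ be two stable matchings in an instance $I$ of SPA-S, and let $M^\lor$ be the assignment defined from $M,M'$ in the context. If a project $p_j$ is undersubscribed in $M^\lor$, then $p_j$ is undersubscribed in at least one of $M$ and $M'$.
   Context: An instance $I$ of SPA-S consists of a finite set $\mathcal{S}$ of students, a finite set $\mathcal{P}$ of projects and a finite set $\mathcal{L}$ of lecturers. Each student $s_i$ ranks a subset $A_i\subseteq\mathcal{P}$ (its acceptable projects) in strict order. Each project is offered by exactly one lecturer; lecturer $l_k$ offers a nonempty set $P_k\subseteq\mathcal{P}$, the $P_k$ partitioning $\mathcal{P}$. Each lecturer $l_k$ ranks in strict order the students who find at least one project of $P_k$ acceptable. Projects have capacities $c_j\in\mathbb{Z}^+$, lecturers have capacities $d_k\in\mathbb{Z}^+$ with $\max\{c_j:p_j\in P_k\}\le d_k\le\sum\{c_j:p_j\in P_k\}$. A pair $(s_i,p_j)$, $p_j$ offered by $l_k$, is acceptable if $p_j\in A_i$ and $s_i$ is on $l_k$'s list. A matching $M$ is a set of acceptable pairs with each student in at most one pair, $|M(p_j)|\le c_j$, $|M(l_k)|\le d_k$, where for an assignment $M$ (a set of acceptable pairs), $M(s_i)$, $M(p_j)$, $M(l_k)$ denote the project of $s_i$, the students assigned to $p_j$, and the students assigned to projects of $l_k$. Undersubscribed/full means fewer than/exactly capacity many assigned students. An acceptable pair $(s_i,p_j)\notin M$ ($p_j$ offered by $l_k$) blocks $M$ if ($s_i$ is unassigned or prefers $p_j$ to $M(s_i)$) and one of: (P1) $p_j$ and $l_k$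 undersubscribed; (P2) $p_j$ undersubscribed, $l_k$ full, $s_i\in M(l_k)$; (P3) $p_j$ undersubscribed, $l_k$ full, $l_k$ prefers $s_i$ to the worst student of $M(l_k)$; (P4) $p_j$ full and $l_k$ prefers $s_i$ to the worst student of $M(p_j)$. $M$ is stable if it has no blocking pair. Given stable matchings $M,M'$, $M^\lor$ is the assignment in which each student unassigned in both $M$ and $M'$ is unassigned, each student assigned to the same project in both is assigned to that project, and every other student is assigned to the worse (in her preference) of her projects in $M$ and $M'$. *)

(* Defs.v *)
(* SPA-S instances over finite types of students S,
   projects P and lecturers L. *)
From mathcomp Require Import all_boot.
Set Implicit Arguments. Unset Strict Implicit. Unset Printing Implicit Defensive.

Record spas (S P L : finType) := SPAS {
  spref : S -> seq P;     (* student's strict preference list (best first) *)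
  lpref : L -> seq S;     (* lecturer's strict preference list (best first) *)
  offer : P -> L;
  pcap  : P -> nat;
  lcap  : L -> nat
}.

Section SPAS.
Variables (S P L : finType) (I : spas S P L).

Definition wf_instance : Prop :=
  [/\ (forall s, uniq (spref I s)),
      (forall l, uniq (lpref I l)),
      (forall l, exists p, offer I p = l) &
      (
      forall l s, (s \in lpref I l) = has (fun p => offer I p == l) (spref I s))] /\
  [/\ (forall p, 0 < pcap I p),
      (forall l, 0 < lcap I l) &
      (forall l, \max_(p | offer I p == l) pcap I p <= lcap I l
                 <= \sum_(p | offer I p == l) pcap I p)].

Definition sprefers (s : S) (p q : P) : bool :=
  index p (spref I s) < index q (spref I s).
Definition lprefers (l : L) (s t : S) : bool :=
  index s (lpref I l) < index t (lpref I l).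

Definition acceptable (s : S) (p : P) : bool :=
  (p \in spref I s) && (s \in lpref I (offer I p)).

Definition assignment := S -> option P.

Definition Mp (M : assignment) (p : P) : {set S} := [set s | M s == Some p].
Definition Ml (M : assignment) (l : L) : {set S} :=
  [set s | if M s is Some p then offer I p == l else false].

Definition is_assignment (M : assignment) : Prop :=
  forall s p, M s = Some p -> acceptable s p.

Definition is_matching (M : assignment) : Prop :=
  [/\ is_assignment M,
      (forall p, #|Mp M p| <= pcap I p) &
      (forall l, #|Ml M l| <= lcap I l)].

Definition p_under (M : assignment) (p : P) : bool := #|Mp M p| < pcap I p.
Definition p_full (M : assignment) (p : P) : bool := #|Mp M p| == pcap I p.
Definition l_under (M : assignment) (l : L) : bool := #|Ml M l| < lcap I l.
Definition l_full (M : assignment) (l : L) : bool := #|Ml M l| == lcap I l.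

Definition worst_of (l : L) (A : {set S}) (t : S) : bool :=
  (t \in A) && [forall u in A, index u (lpref I l) <= index t (lpref I l)].

Definition prefers_to_worst (l : L) (s : S) (A : {set S}) : bool :=
  [exists t, worst_of l A t && lprefers l s t].

Definition blocks (M : assignment) (s : S) (p : P) : bool :=
  let l := offer I p in
  [&& acceptable s p, M s != Some p,
      (if M s is Some q then sprefers s p q else true) &
      [|| p_under M p && l_under M l,
          [&& p_under M p, l_full M l & s \in Ml M l],
          [&& p_under M p, l_full M l & prefers_to_worst l s (Ml M l)]
        | p_full M p && prefers_to_worst l s (Mp M p)]].                (* P4 *)

Definition stable (M : assignment) : Prop :=
  is_matching M /\ forall s p, ~~ blocks M s p.

Definition mvee (M M' : assignment) : assignment := fun s =>
  match M s, M' s with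
  | None, None => None
  | Some p, None => Some p
  | None, Some q => Some q
  | Some p, Some q => if p == q then Some p
                      else if sprefers s p q then Some q else Some p
  end.

End SPAS.

(* Main.v *)
Require Import Defs.
From mathcomp Require Import all_boot.

Section H.
Variables (S P L : finType) (I : spas S P L).

Lemma index_eq_in (T : eqType) (x y : T) (s : seq T) :
  x \in s -> index x s = index y s -> x = y.
Proof.
move=> xs e.
have ys : y \in s by rewrite -index_mem -e index_mem.
by rewrite -(nth_index x xs) e (nth_index x ys).
Qed.

Lemma key (M1 M2 : assignment S P) s p q s' :
  stable I M2 -> M1 s = Some p -> is_assignment I M1 -> M2 s = Some q -> q != p ->
  sprefers I s p q -> ~~ p_under I M2 p -> s' \in Mp M2 p ->
  index s' (lpref I (offer I p)) <= index s (lpref I (offer I p)).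
Proof.
move=> [[_ capp _] nb] M1s asg M2s qp spq nu s'in.
have full : p_full I M2 p.
  by rewrite /p_full eqn_leq capp /=; rewrite /p_under -leqNgt in nu.
have acc := asg _ _ M1s.
have := nb s p; rewrite /blocks acc M2s spq /= full /=.
have -> : (Some q != Some p) = true by apply/eqP => -[] /eqP; rewrite (negbTE qp).
rewrite (negbTE nu) /= => /negP npw.
set l := offer I p.
case: (@arg_maxnP _ s' (mem (Mp M2 p)) (fun t => index t (lpref I l)) s'in)
  => t tin tmax.
have wt : worst_of I l (Mp M2 p) t.
  by rewrite /worst_of; apply/andP; split => //; apply/forall_inP => u uin; exact: tmax.
have : ~~ lprefers I l s t.
  by apply/negP => h; apply: npw; apply/existsP; exists t; rewrite wt h.
rewrite /lprefers -leqNgt => h.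
exact: leq_trans (tmax _ s'in) h.
Qed.

Lemma mv1 (M M' : assignment S P) s p :
  M s = Some p -> mvee I M M' s != Some p ->
  exists q, [/\ M' s = Some q, q != p & sprefers I s p q].
Proof.
rewrite /mvee => ->.
case: (M' s) => [q|]; last by rewrite eqxx.
case: (p =P q) => [->|/eqP qp]; first by rewrite eqxx.
case: ifP => h; last by rewrite eqxx.
by move=> _; exists q; split; rewrite // eq_sym.
Qed.

Lemma mv2 (M M' : assignment S P) s p :
  M' s = Some p -> p \in spref I s -> mvee I M M' s != Some p ->
  exists q, [/\ M s = Some q, q != p & sprefers I s p q].
Proof.
rewrite /mvee => -> pin.
case: (M s) => [q|]; last by rewrite eqxx.
case: (q =P p) => [->|/eqP qp]; first by rewrite eqxx.
case: ifP => h; first by rewrite eqxx.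
move=> _; exists q; split => //.
rewrite /sprefers ltn_neqAle.
move/negbT: h; rewrite /sprefers -leqNgt => ->; rewrite andbT.
apply/negP => /eqP e; move/negP: qp; apply; apply/eqP.
by rewrite (@index_eq_in _ p q _ pin e).
Qed.

End H.

Theorem lemma10 (S P L : finType) (I : spas S P L)
  (M M' : assignment S P) (p : P) :
  wf_instance I -> stable I M -> stable I M' ->
  p_under I (mvee I M M') p ->
  p_under I M p \/ p_under I M' p.
Proof.
move=> _ stM stM' hv.
case: (boolP (p_under I M p)) => h1; first by left.
case: (boolP (p_under I M' p)) => h2; first by right.
exfalso.
have [[asg _ _] _] := stM. have [[asg' _ _] _] := stM'.
set Mv := mvee I M M'.
case: (boolP (Mp M p \subset Mp Mv p)) => sub1.
  by move: h1; rewrite /p_under (leq_ltn_trans (subset_leq_card sub1) hv).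
case: (boolP (Mp M' p \subset Mp Mv p)) => sub2.
  by move: h2; rewrite /p_under (leq_ltn_trans (subset_leq_card sub2) hv).
case/subsetPn: sub1 => s; rewrite !inE => /eqP Ms nv.
case/subsetPn: sub2 => s'; rewrite !inE => /eqP M's' nv'.
have [q [M's qp spq]] := mv1 _ _ _ _ _ _ _ _ Ms nv.
have acc' := asg' _ _ M's'.
have [q' [Ms' q'p spq']] := mv2 _ _ _ _ _ _ _ _ M's' (andP acc').1 nv'.
have s'in : s' \in Mp M' p by rewrite inE M's'.
have sin2 : s \in Mp M p by rewrite inE Ms.
have i1 := @key _ _ _ I M M' s p q s' stM' Ms asg M's qp spq h2 s'in.
have i2 := @key _ _ _ I M' M s' p q' s stM M's' asg' Ms' q'p spq' h1 sin2.
have sin : s \in lpref I (offer I p) by have /andP[] := asg _ _ Ms.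
have e : s = s'.
  by apply: (@index_eq_in _ s s' _ sin); apply/eqP; rewrite eqn_leq i1 i2.
by move: q'p; rewrite -e Ms in Ms'; case: Ms' => ->; rewrite eqxx.
Qed.
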